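(* Let $k\ge1$, let $a_1,\ldots,a_k$ be positive integers, let $\theta=(\theta_1,\ldots,\theta_k)$ be a $k$-tuple of nonnegative integers, and let $r$ be an integer. Then the residue mod $2$ of $$\sum_{B}\prod_{i=1}^k\binom{a_i+b_i-2}{b_i},$$ where $B=(b_1,\ldots,b_k)$ ranges over all $k$-tuples of nonnegative integers with $b_1+\cdots+b_k=k-r$ and $B+\theta\in\mathcal{S}_k$, depends only on the residues $a_i\bmod 2^{\lg(2i)}$, $i=1,\ldots,k$.
   Context: $\mathcal{S}_k$ is the set of $k$-tuples of nonnegative integers such that, for every $j$, the sum of the first $j$ components is $\le j$. $\lg(x)=\lfloor\log_2x\rfloor$. Binomial coefficients are $\binom{x}{b}=x(x-1)\cdots(x-b+1)/b!$ for integer $x$ and $b\ge0$ (so $\binom{-1}{0}=1$). (This sum is the formula, due to earlier work of the author, for $\phi(R^{m-r}V_{j_1}\cdots V_{j_r})$ in the top cohomology of a planar polygon space with a single gene $\{m+3,g_1,\ldots,g_k\}$, $a_i=g_i-g_{i+1}$, $\theta=\theta(\{j_1,\ldots,j_r\})$.) *)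

(* Defs.v *)
From mathcomp Require Import all_boot all_order all_algebra.
Set Implicit Arguments. Unset Strict Implicit. Unset Printing Implicit Defensive.
Import Order.TTheory GRing.Theory Num.Theory.
Local Open Scope ring_scope.

(* Generalized binomial coefficient for an integer upper argument:
   binz x b = x(x-1)...(x-b+1) / b!  (the division is exact). *)
Definition binz (x : int) (b : nat) : int :=
  ((\prod_(i < b) (x - (i : nat)%:Z)) %/ (b`!)%:Z)%Z.

Definition lg (x : nat) : nat := trunc_log 2 x.

(* c : 'I_k -> nat (index i stands for i+1) lies in S_k:
   for every j = 1..k, c_1 + ... + c_j <= j. *)
Definition inS (k : nat) (c : 'I_k -> nat) : bool :=
  [forall j : 'I_k, (\sum_(i < k | (i <= j)%N) c i <= j.+1)%N].

(* Every such B has all b_i <= k (from the S_k condition at j = k),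
   so B ranges over {ffun 'I_k -> 'I_k.+1} without loss. *)
Definition gsum (k : nat) (a theta : 'I_k -> nat) (r : int) : int :=
  \sum_(B : {ffun 'I_k -> 'I_k.+1} |
          (Posz (\sum_(i < k) (B i : nat))%N == k%:Z - r)
          && inS (fun i => (B i : nat) + theta i))
     \prod_(i < k) binz ((a i)%:Z + (B i : nat)%:Z - 2) (B i).

(* Main.v *)
Require Import Defs.
From mathcomp Require Import all_boot all_order all_algebra.
From mathcomp Require Import zify.
Import Order.TTheory GRing.Theory Num.Theory.
Lemma bin2pow_even L j : 0 < j < 2 ^ L -> 2 %| 'C(2 ^ L, j).
Proof.
case: j => [//|j] /andP[_ hj].
have h := mul_bin_diag (2 ^ L) j.
apply/negPn/negP => hodd.
have hc : coprime (2 ^ L) 'C(2 ^ L, j.+1).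
  case: L hj h hodd => [|L] hj h hodd; first by rewrite expn0 coprime1n.
  by rewrite coprime_pexpl // coprime2n; move: hodd; rewrite dvdn2 negbK.
have : 2 ^ L %| j.+1 * 'C(2 ^ L, j.+1) by rewrite -h dvdn_mulr.
rewrite mulnC Gauss_dvdr // => /dvdn_leq => /(_ isT).
by rewrite leqNgt hj.
Qed.

Lemma bin_shift L n b : b < 2 ^ L -> 'C(2 ^ L + n, b) = 'C(n, b) %[mod 2].
Proof.
move=> hb; rewrite -binomial.Vandermonde big_ord_recl /= bin0 mul1n subn0.
rewrite -modnDm.
have -> : (\sum_(i < b) 'C(2 ^ L, bump 0 i) * 'C(n, b - bump 0 i)) %% 2 = 0.
  apply/eqP; rewrite -/(dvdn 2 _); apply: dvdn_sum => i _.
  apply: dvdn_mulr; apply: bin2pow_even.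
  rewrite /bump /= add1n /=.
  by apply: leq_ltn_trans hb; rewrite ltn_ord.
by rewrite addn0 modn_mod.
Qed.

Lemma bin_per L n t b : b < 2 ^ L -> 'C(n + 2 ^ L * t, b) = 'C(n, b) %[mod 2].
Proof.
move=> hb; elim: t => [|t IH]; first by rewrite muln0 addn0.
by rewrite mulnS addnCA bin_shift.
Qed.

Lemma bin_cong L n n' b : b < 2 ^ L -> n = n' %[mod 2 ^ L] ->
  'C(n, b) = 'C(n', b) %[mod 2].
Proof.
move=> hb e.
rewrite (divn_eq n (2 ^ L)) (divn_eq n' (2 ^ L)) e.
by rewrite ![_ * 2 ^ L + _]addnC ![_ %/ _ * _]mulnC !bin_per.
Qed.
Local Open Scope ring_scope.

Lemma prod_ffact (c b : nat) :
  \prod_(i < b) ((c%:Z) - (i : nat)%:Z) = (c ^_ b)%N%:Z.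
Proof.
elim: b => [|b IH]; first by rewrite big_ord0 ffactn0.
rewrite big_ord_recr /= IH ffactnSr.
case: (leqP b c) => h.
  by rewrite PoszM -subzn.
by rewrite ffact_small // !mul0r.
Qed.

Lemma binz_nat (c b : nat) : binz c%:Z b = ('C(c, b))%N%:Z.
Proof.
rewrite /binz prod_ffact -bin_ffact divz_nat mulnK ?fact_gt0 //.
Qed.

Lemma binz0 x : binz x 0 = 1.
Proof. by rewrite /binz big_ord0. Qed.

Lemma binz_cong L (a a' b : nat) : (0 < a)%N -> (0 < a')%N -> (b < 2 ^ L)%N ->
  a = a' %[mod 2 ^ L] ->
  (binz (a%:Z + b%:Z - 2) b %% 2 = binz (a'%:Z + b%:Z - 2) b %% 2)%Z.
Proof.
case: b => [|b] ha ha' hb e; first by rewrite !binz0.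
have E : forall c : nat, (0 < c)%N -> c%:Z + b.+1%:Z - 2 = (c.-1 + b)%N%:Z.
  move=> c hc; case: c hc => [|c] // _ /=; clear e hb ha ha'; lia.
rewrite !E // !binz_nat !modz_nat; congr Posz.
apply: bin_cong hb _.
apply/eqP; rewrite -(eqn_modDr 1) !(addnAC _ b 1) !addn1 !prednK //; apply/eqP.
by rewrite -modnDml e modnDml.
Qed.

Theorem corollary4p3 (k : nat) (a a' theta : 'I_k -> nat) (r : int) :
  (1 <= k)%N ->
  (forall i, 0 < a i)%N ->
  (forall i, 0 < a' i)%N ->
  (forall i : 'I_k, a i = a' i %[mod 2 ^ lg (2 * i.+1)]) ->
  (gsum a theta r %% 2 = gsum a' theta r %% 2)%Z.
Proof.
move=> _ ha ha' e; rewrite /gsum.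
apply: (big_ind2 (fun x y => (x %% 2 = y %% 2)%Z)) => //.
  by move=> x1 x2 y1 y2 h1 h2; rewrite -modzDm h1 h2 modzDm.
move=> B /andP[_ hS].
apply: (big_ind2 (fun x y => (x %% 2 = y %% 2)%Z)) => //.
  by move=> x1 x2 y1 y2 h1 h2; rewrite -modzMm h1 h2 modzMm.
move=> i _; apply: binz_cong => //.
have h1 : (B i <= i.+1)%N.
  move/forallP: hS => /(_ i); apply: leq_trans.
  by rewrite (bigD1 i) //= -addnA leq_addr.
apply: leq_ltn_trans h1 _.
have := trunc_log_ltn (2 * i.+1) (isT : (1 < 2)%N).
by rewrite /lg expnS ltn_pmul2l.
Qed.
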